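(* Let $k$ be a positive integer and let $G$ be an $n$-vertex connected graph with $\operatorname{diam}(G)\ge k+1$ and minimum degree $\delta$. Let $S$ be a $k$-independent set in $G$, and let $i$ be an integer with $3\le i\le \frac{k}{2}-1$. Then $$|N^{i-1}(S)|+|N^i(S)|+|N^{i+1}(S)|\ge 3|S|,$$ and, if $\delta\ge 2$, $$|N^{i-1}(S)|+|N^i(S)|+|N^{i+1}(S)|\ge (\delta+1)|S|.$$
   Context: All graphs are finite, simple and undirected. For vertices $u,v$, $d(u,v)$ is the length of a shortest $u$–$v$ path, and $\operatorname{diam}(G)$ is the maximum distance between two vertices. For a nonnegative integer $k$, a $k$-independent set in $G$ is a set $S\subseteq V(G)$ such that any two distinct vertices of $S$ are at distance greater than $k$. For $S\subseteq V(G)$, $N(S)$ denotes the set of vertices adjacent to some vertex of $S$. Set $N^0(S)=S$, $N^1(S)=N(S)$, and for $j\ge 2$, $N^j(S)=N(N^{j-1}(S))\setminus\bigl(N^{j-2}(S)\cup N^{j-1}(S)\bigr)$. *)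

(* Defs.v *)
(* A finite simple graph is a symmetric irreflexive relation
   e on a finType T (the vertex set; n = #|T|). *)
From mathcomp Require Import all_boot.
Set Implicit Arguments. Unset Strict Implicit. Unset Printing Implicit Defensive.

Section Graph.
Variables (T : finType) (e : rel T).

Definition simple_graph : Prop := symmetric e /\ irreflexive e.

Definition walk (u v : T) (p : seq T) : bool := path e u p && (last u p == v).

Definition connected_graph : Prop := forall u v : T, exists p, walk u v p.

Definition dist_le (u v : T) (m : nat) : Prop :=
  exists p, walk u v p /\ size p <= m.

Definition diam_ge (m : nat) : Prop :=
  exists u v : T, ~ dist_le u v m.-1.

Definition k_independent (k : nat) (S : {set T}) : Prop :=
  forall x y, x \in S -> y \in S -> x != y -> ~ dist_le x y k.

Definition deg (v : T) : nat := #|[set w | e v w]|.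

Definition min_degree (d : nat) : Prop :=
  (forall v, d <= deg v) /\ (exists v, deg v = d).

Definition nbhd (A : {set T}) : {set T} := [set y | [exists x in A, e x y]].

(* pairs (N^j(S), N^{j+1}(S)) *)
Fixpoint Npair (S : {set T}) (j : nat) : {set T} * {set T} :=
  match j with
  | 0 => (S, nbhd S)
  | j'.+1 => let: (a, b) := Npair S j' in (b, nbhd b :\: (a :|: b))
  end.

Definition Nj (S : {set T}) (j : nat) : {set T} := (Npair S j).1.

End Graph.

(* Main.v *)
Require Import Defs.
From mathcomp Require Import all_boot.
From mathcomp Require Import zify.
Set Implicit Arguments. Unset Strict Implicit. Unset Printing Implicit Defensive.

Section Aux.
Variables (T : finType) (e : rel T).
Hypothesis esym : symmetric e.
Hypothesis eirr : irreflexive e.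

Fixpoint B (A : {set T}) (m : nat) : {set T} :=
  if m is m'.+1 then B A m' :|: nbhd e (B A m') else A.

Lemma in_nbhd (A : {set T}) y : (y \in nbhd e A) = [exists x in A, e x y].
Proof. by rewrite /nbhd inE. Qed.

Lemma inB_S (A : {set T}) m y : (y \in B A m.+1) = (y \in B A m) || [exists x in B A m, e x y].
Proof. by rewrite /= in_setU in_nbhd. Qed.

Lemma B_step (A : {set T}) m : B A m \subset B A m.+1.
Proof. by rewrite /= subsetUl. Qed.

Lemma B_mono (A : {set T}) m n : m <= n -> B A m \subset B A n.
Proof.
elim: n => [|n IH]; first by rewrite leqn0 => /eqP->.
rewrite leq_eqVlt => /orP[/eqP->|]; first exact: subxx.
rewrite ltnS => /IH H; exact: subset_trans H (B_step _ _).
Qed.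

Lemma path_B (A : {set T}) a p : a \in A -> path e a p -> last a p \in B A (size p).
Proof.
move=> aA; elim/last_ind: p => [|p y IH] //=.
rewrite rcons_path last_rcons size_rcons => /andP[/IH Hp Hy].
rewrite inB_S; apply/orP; right; apply/existsP; exists (last a p); by rewrite Hp.
Qed.

Lemma dist_le_B (A : {set T}) y m : y \in B A m <-> exists2 a, a \in A & dist_le e a y m.
Proof.
split.
  elim: m y => [|m IH] y.
    by move=> yA; exists y => //; exists [::]; rewrite /walk /= eqxx.
  rewrite inB_S => /orP[/IH [a aA [p [wp sp]]]|/existsP[x /andP[xB exy]]].
    by exists a => //; exists p; split => //; rewrite (leq_trans sp).
  have [a aA [p [/andP[pp /eqP lp] sp]]] := IH x xB.
  exists a => //; exists (rcons p y); split.
    by rewrite /walk rcons_path last_rcons pp lp exy eqxx.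
  by rewrite size_rcons.
move=> [a aA [p [/andP[pp /eqP lp] sp]]].
have := path_B aA pp; rewrite lp => H.
exact: (subsetP (B_mono A sp)).
Qed.

Lemma dist_le_mono u v m n : m <= n -> dist_le e u v m -> dist_le e u v n.
Proof. by move=> mn [p [w s]]; exists p; split => //; apply: leq_trans mn. Qed.

Lemma dist_le_sym u v m : dist_le e u v m -> dist_le e v u m.
Proof.
move=> [p [/andP[pp /eqP lp] sp]].
case/lastP: p pp lp sp => [|q y] pp lp sp.
  by exists [::]; rewrite /walk /= -lp eqxx.
exists (rev (u :: q)); split; last by rewrite size_rev /= size_rcons in sp *.
rewrite last_rcons in lp; rewrite /walk; apply/andP; split.
  have := rev_path e u (rcons q y); rewrite belast_rcons last_rcons lp => ->.
  rewrite (@eq_path _ _ e); first by rewrite -lp.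
  by move=> a b /=; rewrite esym.
by rewrite rev_cons last_rcons.
Qed.

Lemma dist_le_trans u v w m n :
  dist_le e u v m -> dist_le e v w n -> dist_le e u w (m + n).
Proof.
move=> [p [/andP[pp /eqP lp] sp]] [q [/andP[pq /eqP lq] sq]].
exists (p ++ q); split; last by rewrite size_cat leq_add.
by rewrite /walk cat_path last_cat lp pp pq lq eqxx.
Qed.

Lemma B_stable (A : {set T}) m : B A m.+1 = B A m -> forall t, B A (m + t) = B A m.
Proof.
move=> H; elim=> [|t IH]; first by rewrite addn0.
by rewrite -[RHS]H addnS /= IH.
Qed.

Lemma layer_exists (A : {set T}) m w N j : w \in B A N -> w \notin B A m -> j <= m ->
  exists x, (x \in B A j.+1) && (x \notin B A j).
Proof.
move=> wN wm jm.
case: (boolP [exists x, (x \in B A j.+1) && (x \notin B A j)]) => [/existsP//|/existsPn nex].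
have sub : B A j.+1 \subset B A j.
  by apply/subsetP => x xi; move: (nex x); rewrite xi /= negbK.
have eq : B A j.+1 = B A j by apply/eqP; rewrite eqEsubset sub B_step.
have := B_stable eq N => H.
have : w \in B A j by rewrite -H; apply: (subsetP (B_mono A (leq_addl j N))).
move=> wj; have := subsetP (B_mono A jm) w wj; by rewrite (negbTE wm).
Qed.

Definition Lay (S : {set T}) j := B S j :\: (if j is j'.+1 then B S j' else set0).

Lemma inLayS (S : {set T}) j x : (x \in Lay S j.+1) = (x \notin B S j) && (x \in B S j.+1).
Proof. by rewrite /Lay in_setD. Qed.

Lemma inLay0 (S : {set T}) x : (x \in Lay S 0) = (x \in S).
Proof. by rewrite /Lay in_setD in_set0. Qed.

Lemma step_eq (S : {set T}) j :
  nbhd e (Lay S j.+1) :\: (Lay S j :|: Lay S j.+1) = Lay S j.+2.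
Proof.
apply/setP => x; rewrite in_setD in_setU in_nbhd !inLayS.
apply/idP/idP.
- case/andP => /norP[nLj nLj1] /existsP[y /andP[yL eyx]].
  move: yL; rewrite inLayS => /andP[yBj yBj1].
  have xB2 : x \in B S j.+2.
    by rewrite inB_S; apply/orP; right; apply/existsP; exists y; rewrite yBj1.
  rewrite xB2 andbT; apply/negP => xB1.
  move: nLj1; rewrite xB1 andbT negbK => xBj.
  case: j nLj xBj yBj yBj1 xB2 xB1 => [|j] nLj xBj yBj yBj1 xB2 xB1.
    by move: nLj; rewrite inLay0 => /negP; apply.
  move: nLj; rewrite inLayS xBj andbT negbK => xBj'.
  move/negP: yBj; apply; rewrite inB_S; apply/orP; right; apply/existsP.
  by exists x; rewrite xBj' esym.
- case/andP => xB1 xB2.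
  move: (xB2); rewrite inB_S (negbTE xB1) /= => /existsP[y /andP[yB1 eyx]].
  have yBj : y \notin B S j.
    apply/negP => yBj; move/negP: xB1; apply; rewrite inB_S; apply/orP; right.
    by apply/existsP; exists y; rewrite yBj.
  apply/andP; split.
    apply/norP; split; last by rewrite andbF.
    apply/negP; rewrite /Lay => /(subsetP (subsetDl _ _)) /(subsetP (B_step _ _)).
    by rewrite (negbTE xB1).
  by apply/existsP; exists y; rewrite inLayS yBj yB1 eyx.
Qed.

Lemma base_eq (S : {set T}) : (forall x y, x \in S -> y \in S -> ~~ e x y) ->
  nbhd e S = Lay S 1.
Proof.
move=> hS; apply/setP => x; rewrite inLayS inB_S /= in_nbhd.
case xS: (x \in S) => //=.
apply/existsP => -[y /andP[yS eyx]]; by rewrite (negbTE (hS _ _ yS xS)) in eyx.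
Qed.

Lemma Npair_L (S : {set T}) : (forall x y, x \in S -> y \in S -> ~~ e x y) ->
  forall j, Npair e S j = (Lay S j, Lay S j.+1).
Proof.
move=> hS; elim => [|j IH] /=.
  rewrite -base_eq //; congr pair; apply/setP => x; by rewrite inLay0.
by rewrite IH -step_eq.
Qed.

Lemma card_bigcup_disj (S : {set T}) (F : T -> {set T}) :
  (forall s s', s \in S -> s' \in S -> s != s' -> [disjoint F s & F s']) ->
  #|\bigcup_(s in S) F s| = \sum_(s in S) #|F s|.
Proof.
move Hn: #|S| => n; elim: n S Hn => [|n IH] S Hn dis.
  by rewrite (cards0_eq Hn) !big_set0 cards0.
have /card_gt0P [s sS] : 0 < #|S| by rewrite Hn.
rewrite (big_setD1 s sS) (big_setD1 s sS) /= cardsU.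
have d1 : [disjoint F s & \bigcup_(i in S :\ s) F i].
  apply: bigcup_disjoint => a; rewrite in_setD1 => /andP[ne aS].
  by apply: dis => //; rewrite eq_sym.
have n1 : #|S :\ s| = n by move: Hn; rewrite (cardsD1 s) sS => -[].
have d2 : forall a b, a \in S :\ s -> b \in S :\ s -> a != b -> [disjoint F a & F b].
  by move=> a b; rewrite !in_setD1 => /andP[_ aS] /andP[_ bS]; apply: dis.
by rewrite (disjoint_setI0 d1) cards0 subn0 (IH _ n1 d2).
Qed.

Lemma count2 (S U : {set T}) (D : T -> {set T}) b :
  (forall s s', s \in S -> s' \in S -> s != s' -> [disjoint D s & D s']) ->
  (forall s, s \in S -> exists X : {set T}, [/\ X \subset U, X \subset D s & b <= #|X|]) ->
  b * #|S| <= #|U|.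
Proof.
move=> dis ex.
pose F s := odflt set0 [pick X : {set T} | [&& X \subset U, X \subset D s & b <= #|X|]].
have HF s : s \in S -> [&& F s \subset U, F s \subset D s & b <= #|F s|].
  move=> sS; rewrite /F; case: pickP => [X //|none] /=.
  have [X [h1 h2 h3]] := ex s sS; by move: (none X); rewrite h1 h2 h3.
have disF : forall s s', s \in S -> s' \in S -> s != s' -> [disjoint F s & F s'].
  move=> s s' sS s'S ne; have /and3P[_ h _] := HF s sS; have /and3P[_ h' _] := HF s' s'S.
  exact: disjointWl h (disjointWr h' (dis s s' sS s'S ne)).
apply: (@leq_trans (\sum_(s in S) #|F s|)).
  rewrite mulnC -sum_nat_const; apply: leq_sum => s sS; by case/and3P: (HF s sS).
rewrite -card_bigcup_disj //; apply: subset_leq_card; apply/bigcupsP => s sS.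
by case/and3P: (HF s sS).
Qed.

End Aux.

Theorem lemma1 (T : finType) (e : rel T) (k delta : nat) (S : {set T}) (i : nat) :
  simple_graph e -> connected_graph e ->
  0 < k -> diam_ge e k.+1 -> min_degree e delta ->
  k_independent e k S ->
  3 <= i -> 2 * i + 2 <= k ->
  3 * #|S| <= #|Nj e S i.-1| + #|Nj e S i| + #|Nj e S i.+1| /\
  (2 <= delta ->
   (delta + 1) * #|S| <= #|Nj e S i.-1| + #|Nj e S i| + #|Nj e S i.+1|).
Proof.
move=> [esym eirr] conn k0 [u [v nuv]] [mind _] ind i3 ik.
have noedge : forall x y, x \in S -> y \in S -> ~~ e x y.
  move=> x y xS yS; apply/negP => exy; case: (eqVneq x y) => [xy|ne].
    by move: exy; rewrite xy eirr.
  apply: (ind x y xS yS ne); exists [:: y]; split; last by [].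
  by rewrite /walk /= exy eqxx.
have [j ij] : exists j, i = j.+2 by exists (i - 2); lia.
subst i.
rewrite /Nj !(Npair_L esym noedge) /=.
have Bs_dist : forall s x m, x \in B e [set s] m <-> dist_le e s x m.
  move=> s x m; split.
    by case/dist_le_B => a; rewrite in_set1 => /eqP ->.
  by move=> d; apply/dist_le_B; exists s; rewrite ?in_set1.
have LS : forall s x m, s \in S -> 2 * m.+1 <= k.+1 ->
    x \in B e [set s] m.+1 -> x \notin B e [set s] m -> x \in Lay e S m.+1.
  move=> s x m sS hm x1 x0; rewrite inLayS; apply/andP; split.
    apply/negP => /dist_le_B [s' s'S d']; case: (eqVneq s s') => [eq|ne].
      by move/negP: x0; apply; apply/Bs_dist; rewrite eq.
    apply: (ind s s' sS s'S ne).
    have d1 := (Bs_dist s x m.+1).1 x1.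
    apply: dist_le_mono (dist_le_trans d1 (dist_le_sym esym d')); lia.
  by apply/dist_le_B; exists s => //; apply/Bs_dist.
set U := Lay e S j.+1 :|: Lay e S j.+2 :|: Lay e S j.+3.
have Ule : #|U| <= #|Lay e S j.+1| + #|Lay e S j.+2| + #|Lay e S j.+3|.
  rewrite /U !cardsU; lia.
have dis : forall s s', s \in S -> s' \in S -> s != s' ->
    [disjoint B e [set s] j.+3 & B e [set s'] j.+3].
  move=> s s' sS s'S ne; rewrite -setI_eq0; apply/eqP/setP => z.
  rewrite in_setI in_set0; apply/negP => /andP[z1 z2].
  apply: (ind s s' sS s'S ne).
  apply: dist_le_mono (dist_le_trans ((Bs_dist _ _ _).1 z1)
                        (dist_le_sym esym ((Bs_dist _ _ _).1 z2))); lia.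
have layers : forall s, s \in S -> forall t, t <= j.+2 ->
    exists x, (x \in B e [set s] t.+1) && (x \notin B e [set s] t).
  move=> s sS t tj.
  have [w nw] : exists w, w \notin B e [set s] j.+3.
    case: (boolP (u \in B e [set s] j.+3)) => hu; last by exists u.
    case: (boolP (v \in B e [set s] j.+3)) => hv; last by exists v.
    exfalso; apply: nuv => /=.
    apply: dist_le_mono (dist_le_trans (dist_le_sym esym ((Bs_dist _ _ _).1 hu))
                          ((Bs_dist _ _ _).1 hv)); lia.
  have [p wp] := conn s w.
  have wN : w \in B e [set s] (size p) by apply/Bs_dist; exists p.
  apply: (layer_exists wN nw); lia.
have gen : forall b, (forall s, s \in S -> exists X : {set T},
    [/\ X \subset U, X \subset B e [set s] j.+3 & b <= #|X|]) ->
    b * #|S| <= #|Lay e S j.+1| + #|Lay e S j.+2| + #|Lay e S j.+3|.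
  by move=> b H; apply: leq_trans Ule; apply: count2 dis H.
have inU1 : forall x, x \in Lay e S j.+1 -> x \in U by move=> x h; rewrite /U !in_setU h.
have inU2 : forall x, x \in Lay e S j.+2 -> x \in U by move=> x h; rewrite /U !in_setU h orbT.
have inU3 : forall x, x \in Lay e S j.+3 -> x \in U by move=> x h; rewrite /U !in_setU h orbT.
split.
  apply: gen => s sS.
  have [x1 /andP[a1 b1]] := layers s sS j (leq_trans (leqnSn _) (leqnSn _)).
  have [x2 /andP[a2 b2]] := layers s sS j.+1 (leqnSn _).
  have [x3 /andP[a3 b3]] := layers s sS j.+2 (leqnn _).
  exists (x1 |: (x2 |: [set x3])); split.
  - apply/subsetP => z /setU1P[->|/setU1P[->|/set1P->]].
    + by (try rewrite /U); rewrite ?in_setU; apply/orP; left; apply/orP; left; apply: (LS s) => //; lia.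
    + by (try rewrite /U); rewrite ?in_setU; apply/orP; left; apply/orP; right; apply: (LS s) => //; lia.
    + by (try rewrite /U); rewrite ?in_setU; apply/orP; right; apply: (LS s) => //; lia.
  - apply/subsetP => z /setU1P[->|/setU1P[->|/set1P->]].
    + have hh := @B_mono _ e [set s] j.+1 j.+3 (leqW (leqnSn _)); exact: (subsetP hh _ a1).
    + have hh := @B_mono _ e [set s] j.+2 j.+3 (leqnSn _); exact: (subsetP hh _ a2).
    + by [].
  - have n12 : x1 != x2.
      by apply/eqP => h; move: b2; rewrite -h a1.
    have n13 : x1 != x3.
      apply/eqP => h; move: b3; rewrite -h.
      by rewrite (subsetP (@B_mono _ e [set s] j.+1 j.+2 (leqnSn _)) _ a1).
    have n23 : x2 != x3.
      by apply/eqP => h; move: b3; rewrite -h a2.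
    rewrite !cardsU1 cards1 !in_setU !in_set1 (negbTE n12) (negbTE n13) (negbTE n23).
    by [].
move=> d2; apply: gen => s sS.
have [x2 /andP[a2 b2]] := layers s sS j.+1 (leqnSn _).
exists (x2 |: [set y | e x2 y]); split.
- apply/subsetP => z /setU1P[->|]; last rewrite inE => ez.
    by (try rewrite /U); rewrite ?in_setU; apply/orP; left; apply/orP; right; apply: (LS s) => //; lia.
  have z3 : z \in B e [set s] j.+3.
    by rewrite inB_S; apply/orP; right; apply/existsP; exists x2; rewrite a2.
  have z0 : z \notin B e [set s] j.
    apply/negP => zj; move/negP: b2; apply; rewrite inB_S; apply/orP; right.
    by apply/existsP; exists z; rewrite zj esym.
  case: (boolP (z \in B e [set s] j.+1)) => z1.
    by (try rewrite /U); rewrite ?in_setU; apply/orP; left; apply/orP; left; apply: (LS s) => //; lia.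
  case: (boolP (z \in B e [set s] j.+2)) => z2.
    by (try rewrite /U); rewrite ?in_setU; apply/orP; left; apply/orP; right; apply: (LS s) => //; lia.
  by (try rewrite /U); rewrite ?in_setU; apply/orP; right; apply: (LS s) => //; lia.
- apply/subsetP => z /setU1P[->|]; last rewrite inE => ez.
    by apply: (subsetP (B_step _ _ _)) a2.
  by rewrite inB_S; apply/orP; right; apply/existsP; exists x2; rewrite a2.
- rewrite cardsU1 inE eirr /= add1n addn1 ltnS; exact: mind.
Qed.
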